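(* Let $\mathbf A$ be a Pavelka algebra and $\exists\colon A\to A$ a closure operator, and put $\forall(x)=\neg\exists(\neg x)$. Then $(\mathbf A,\exists)$ is a monadic Pavelka algebra if and only if $(\mathbf A,\forall,\forall)$ is a tense Pavelka algebra.
   Context: An MV-algebra $(A;\oplus,\neg,0)$ carries derived operations $1=\neg0$, $x\cdot y=\neg(\neg x\oplus\neg y)$, $x\rightarrow y=\neg x\oplus y$, lattice operations $\vee,\wedge$ of the order $x\le y$ iff $\neg x\oplus y=1$. A Pavelka algebra is $\mathbf A=(A;\oplus,\neg,\{\mathbf r\mid r\in[0,1]\cap\mathbb Q\})$ with $(A;\oplus,\neg,\mathbf 0)$ an MV-algebra, $\mathbf r\oplus\mathbf s=\mathbf t$ whenever $\min\{r+s,1\}=t$, and $\neg\mathbf r=\mathbf s$ whenever $1-r=s$. A closure operator is a monotone $C$ with $x\le C(x)$, $C(C(x))=C(x)$. A monadic Pavelka algebra is a pair $(\mathbf A,\exists)$ with $\exists$ a closure operator on $A$ such that $\exists(\neg\exists(x))=\neg\exists(x)$ and $\mathbf r\cdot\exists(x)=\exists(\mathbf r\cdot x)$ for all $x\in A$ and constants $\mathbf r$. A tense Pavelka algebra is $(\mathbf A,G,H)$ with $G,H\colon A\to A$ such that for all $x,y$ and constants $\mathbf r$: (PT1) $G(x\wedge y)=G(x)\wedge G(y)$, $H(x\wedge y)=H(x)\wedge H(y)$; (PT2) $\mathbf r\rightarrow G(x)=G(\mathbf r\rightarrow x)$, $\mathbf r\rightarrow H(x)=H(\mathbf r\rightarrow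 x)$; (PT3) $\neg H(\neg G(x))\le x$, $\neg G(\neg H(x))\le x$. *)

(* Defs.v *)
From HB Require Import structures.
From mathcomp Require Import all_boot all_order all_algebra.
Set Implicit Arguments. Unset Strict Implicit. Unset Printing Implicit Defensive.
Import Order.TTheory GRing.Theory Num.Theory.
Local Open Scope ring_scope.

(* Signature of a Pavelka algebra: carrier, oplus, neg, and the constants
   r (for r rational); only constants with 0 <= r <= 1 matter. *)
Record pavelka_sig := PSig {
  car :> Type;
  op : car -> car -> car;
  ng : car -> car;
  cst : rat -> car
}.

Section Derived.
Variable P : pavelka_sig.
Definition pzero : P := @cst P 0.
Definition pone : P := ng pzero.
Definition pmul (x y : P) : P := ng (op (ng x) (ng y)).
Definition pimp (x y : P) : P := op (ng x) y.
Definition ple (x y : P) : Prop := op (ng x) y = pone.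
(* standard MV-algebra lattice operations (join/meet of the order ple) *)
Definition pjoin (x y : P) : P := op (ng (op (ng x) y)) y.
Definition pmeet (x y : P) : P := ng (pjoin (ng x) (ng y)).

Definition is_const_index (r : rat) : bool := (0 <= r) && (r <= 1).

Record is_mv_algebra : Prop := {
  mv_assoc : forall x y z : P, op (op x y) z = op x (op y z);
  mv_comm  : forall x y : P, op x y = op y x;
  mv_zero  : forall x : P, op x pzero = x;
  mv_negK  : forall x : P, ng (ng x) = x;
  mv_one   : forall x : P, op x pone = pone;
  mv_luk   : forall x y : P, op (ng (op (ng x) y)) y = op (ng (op (ng y) x)) x
}.

Record is_pavelka : Prop := {
  pv_mv : is_mv_algebra;
  pv_add : forall r s t, is_const_index r -> is_const_index s -> is_const_index t ->
             Num.min (r + s) 1 = t -> op (@cst P r) (@cst P s) = @cst P t;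
  pv_neg : forall r s, is_const_index r -> is_const_index s ->
             1 - r = s -> ng (@cst P r) = @cst P s
}.

Definition closure_op (C : P -> P) : Prop :=
  (forall x y : P, ple x y -> ple (C x) (C y)) /\
  (forall x : P, ple x (C x)) /\
  (forall x : P, C (C x) = C x).

Definition is_monadic (E : P -> P) : Prop :=
  closure_op E /\
  (forall x : P, E (ng (E x)) = ng (E x)) /\
  (forall r (x : P), is_const_index r -> pmul (@cst P r) (E x) = E (pmul (@cst P r) x)).

Definition is_tense (G H : P -> P) : Prop :=
  (* PT1 *)
  (forall x y : P, G (pmeet x y) = pmeet (G x) (G y) /\ H (pmeet x y) = pmeet (H x) (H y)) /\
  (* PT2 *)
  (forall r (x : P), is_const_index r ->
     pimp (@cst P r) (G x) = G (pimp (@cst P r) x) /\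
     pimp (@cst P r) (H x) = H (pimp (@cst P r) x)) /\
  (* PT3 *)
  (forall x : P, ple (ng (H (ng (G x)))) x /\ ple (ng (G (ng (H x)))) x).

Definition univ_of (E : P -> P) : P -> P := fun x => ng (E (ng x)).
End Derived.

(* Main.v *)
Require Import Defs.
From mathcomp Require Import all_boot all_order all_algebra.

Section MV.
Set Implicit Arguments. Unset Strict Implicit.
Variable P : pavelka_sig.
Hypothesis M : is_mv_algebra P.

Local Notation A := (mv_assoc M). Local Notation C := (mv_comm M).
Local Notation Z := (mv_zero M). Local Notation K := (mv_negK M).
Local Notation O := (mv_one M). Local Notation L := (mv_luk M).

Lemma ng1 : ng (pone P) = pzero P.
Proof. by rewrite /pone K. Qed.

Lemma zl (x : P) : op (pzero P) x = x.
Proof. by rewrite C Z. Qed.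

Lemma ol (x : P) : op (pone P) x = pone P.
Proof. by rewrite C O. Qed.

Lemma compl (x : P) : op (ng x) x = pone P.
Proof. have := L x (pone P). by rewrite (O (ng x)) ng1 !zl => ->. Qed.

Lemma ple_refl (x : P) : ple x x.
Proof. exact: compl. Qed.

Lemma ple_ex (x y : P) : ple x y -> exists z, y = op x z.
Proof.
move=> h; exists (ng (op (ng y) x)).
have := L x y; rewrite h ng1 zl => h2; by rewrite (C x) -h2.
Qed.

Lemma ex_ple (x z : P) : ple x (op x z).
Proof. by rewrite /ple -A compl ol. Qed.

Lemma ple_trans (x y z : P) : ple x y -> ple y z -> ple x z.
Proof.
move=> /ple_ex [a ->] /ple_ex [b ->]; rewrite A; exact: ex_ple.
Qed.

Lemma ple_anti (x y : P) : ple x y -> ple y x -> x = y.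
Proof.
move=> h1 h2; have := L x y. by rewrite h1 h2 ng1 !zl => ->.
Qed.

Lemma ple_ng (x y : P) : ple x y -> ple (ng y) (ng x).
Proof. by rewrite /ple K C. Qed.

Lemma ple_opr (x y c : P) : ple x y -> ple (op x c) (op y c).
Proof.
move=> /ple_ex [d ->]; rewrite (A x d c) (C d c) -A; exact: ex_ple.
Qed.

Lemma join_ubr (x y : P) : ple y (pjoin x y).
Proof. rewrite /pjoin C; exact: ex_ple. Qed.

Lemma join_ubl (x y : P) : ple x (pjoin x y).
Proof. rewrite /pjoin L C; exact: ex_ple. Qed.

Lemma join_lub (x y z : P) : ple x z -> ple y z -> ple (pjoin x y) z.
Proof.
move=> hx hy.
have h1 : ple (pjoin x y) (pjoin z y).
  by apply: ple_opr; apply: ple_ng; apply: ple_opr; apply: ple_ng.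
apply: (ple_trans h1); rewrite /pjoin L hy ng1 zl; exact: ple_refl.
Qed.

Lemma meet_lbl (x y : P) : ple (pmeet x y) x.
Proof. rewrite /pmeet -{2}(K x); apply: ple_ng; exact: join_ubl. Qed.

Lemma meet_lbr (x y : P) : ple (pmeet x y) y.
Proof. rewrite /pmeet -{2}(K y); apply: ple_ng; exact: join_ubr. Qed.

Lemma meet_glb (x y z : P) : ple z x -> ple z y -> ple z (pmeet x y).
Proof.
move=> hx hy; rewrite /pmeet -(K z); apply: ple_ng; apply: join_lub; exact: ple_ng.
Qed.

Lemma join_meet (x y : P) : pjoin x y = ng (pmeet (ng x) (ng y)).
Proof. by rewrite /pmeet !K. Qed.

End MV.

Theorem theorem14 (P : pavelka_sig) (HP : is_pavelka P) (E : P -> P)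
  (HE : closure_op E) :
  is_monadic E <-> is_tense (univ_of E) (univ_of E).
Proof.
have M := pv_mv HP.
have K := mv_negK M.
case: HE => [Emon [Einc Eidem]].
split.
- move=> [_ [Eng Ec]].
  have fixm : forall u v, E u = u -> E v = v -> E (pmeet u v) = pmeet u v.
    move=> u v hu hv; apply: (ple_anti M).
    + apply: (meet_glb M).
      * rewrite -{2}hu; apply: Emon; exact: meet_lbl.
      * rewrite -{2}hv; apply: Emon; exact: meet_lbr.
    + exact: Einc.
  have ejoin : forall a b, E (pjoin a b) = pjoin (E a) (E b).
    move=> a b.
    have fj : E (pjoin (E a) (E b)) = pjoin (E a) (E b).
      rewrite (join_meet M).
      have hm : E (pmeet (ng (E a)) (ng (E b))) = pmeet (ng (E a)) (ng (E b)).
        by apply: fixm; apply: Eng.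
      by rewrite -{1}hm Eng hm.
    apply: (ple_anti M).
    + rewrite -fj; apply: Emon; apply: (join_lub M).
      * apply: (ple_trans M (Einc a)); exact: join_ubl.
      * apply: (ple_trans M (Einc b)); exact: join_ubr.
    + apply: (join_lub M); apply: Emon; [exact: join_ubl | exact: join_ubr].
  split; [|split].
  + move=> x y; suff h : univ_of E (pmeet x y) = pmeet (univ_of E x) (univ_of E y) by [].
    by rewrite /univ_of /pmeet K ejoin !K.
  + move=> r x hr.
    suff h : pimp (cst P r) (univ_of E x) = univ_of E (pimp (cst P r) x) by [].
    rewrite /univ_of /pimp.
    have := Ec r (ng x) hr; rewrite /pmul K => <-.
    by rewrite K.
  + move=> x.
    suff h : ple (ng (univ_of E (ng (univ_of E x)))) x by [].
    rewrite /univ_of !K Eng -{2}(K x); apply: (ple_ng M); exact: Einc.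
- move=> [_ [T2 T3]].
  split; first by [].
  split.
  + move=> y; apply: (ple_anti M); last exact: Einc.
    have := (T3 (ng (E y))).1; rewrite /univ_of !K Eidem; exact.
  + move=> r x hr.
    have := (T2 r (ng x) hr).1; rewrite /univ_of /pimp /pmul !K => h.
    by rewrite h K.
Qed.
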